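(* Let $L$ be even and consider a periodic chain of $L$ spin-1's. For each bond $(j,j+1)$ let $\ket{J_{s,m}}$ ($0\le s\le2$, $-s\le m\le s$) denote the total-spin eigenstates of the two spins $j,j+1$ (total spin $s$, $S^z_j+S^z_{j+1}=m$). Let $\mathcal{E}\in\mathbb{R}$ and let $z^{(m,n)}_j\in\mathbb{C}$ ($m,n\in\{-2,-1,0\}$) with $z^{(m,n)}_j=\overline{z^{(n,m)}_j}$, and define $$H^{(a)}=\sum_{j=1}^L\hat h_{j,j+1},\quad \hat h_{j,j+1}=\mathcal{E}\big(\ket{J_{2,1}}\bra{J_{2,1}}+\ket{J_{2,2}}\bra{J_{2,2}}\big)+\sum_{m,n=-2}^{0}z^{(m,n)}_j\ket{J_{2,m}}\bra{J_{2,n}},$$ and $\mathcal{P}^{(a)}=\sum_{j=1}^L(-1)^j(S^+_j)^2$. Let $\ket G$ be the spin-1 AKLT ground state on the periodic chain, i.e. the (unique up to scale) state with no total-spin-2 component on any bond $(j,j+1)$. Then (i) $H^{(a)}\ket G=0$; (ii) $[H^{(a)},\mathcal{P}^{(a)}]\ket G=2\mathcal{E}\,\mathcal{P}^{(a)}\ket G$; (iii) $[[H^{(a)},\mathcal{P}^{(a)}],\mathcal{P}^{(a)}]\ket G=0$; (iv) $[[[H^{(a)},\mathcal{P}^{(a)}],\mathcal{P}^{(a)}],\mathcal{P}^{(a)}]=0$. Consequently $H^{(a)}(\mathcal{P}^{(a)})^n\ket G=2n\mathcal{E}(\mathcal{P}^{(a)})^n\ket G$ for all $n\ge0$.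
   Context: $S^+_j$ is the spin-1 raising operator on site $j$, indices taken mod $L$. The AKLT Hamiltonian is the special case $\mathcal{E}=1$, $z^{(m,n)}_j=\delta_{m,n}$. *)

(* Defs.v *)
From HB Require Import structures.
From mathcomp Require Import all_boot all_order all_algebra.
Set Implicit Arguments. Unset Strict Implicit. Unset Printing Implicit Defensive.
Import Order.TTheory GRing.Theory Num.Theory.
Local Open Scope ring_scope.

Section SpinChain.
Variable C : numClosedFieldType.
Variable L : nat.

(* local basis of a spin-1: k : 'I_3 represents S^z = k - 1, i.e. k = 1 + m. *)
Definition cfg := {ffun 'I_L -> 'I_3}.          (* sites 0..L-1 = paper's 1..L *)
Definition state := {ffun cfg -> C}.
Definition op := {ffun cfg * cfg -> C}.        (* matrix entries <x|A|y> *)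

Definition opmul (A B : op) : op :=
  [ffun p : cfg * cfg => \sum_(z : cfg) A (p.1, z) * B (z, p.2)].
Definition opapp (A : op) (v : state) : state :=
  [ffun x => \sum_(y : cfg) A (x, y) * v y].
Definition opscale (c : C) (A : op) : op := [ffun p => c * A p].
Definition stscale (c : C) (v : state) : state := [ffun x => c * v x].
Definition comm (A B : op) : op := opmul A B - opmul B A.

Definition nxt (j : 'I_L) : 'I_L := ordS j.

Definition site_op (j : 'I_L) (s : 'I_3 -> 'I_3 -> C) : op :=
  [ffun p : cfg * cfg => if [forall i, (i != j) ==> (p.1 i == p.2 i)]
             then s (p.1 j) (p.2 j) else 0].

(* an operator acting on the bond (j, j+1): t k1' k2' k1 k2 = <k1' k2'|t|k1 k2> *)
Definition bond_op (j : 'I_L) (t : 'I_3 -> 'I_3 -> 'I_3 -> 'I_3 -> C) : op :=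
  [ffun p : cfg * cfg => if [forall i, ((i != j) && (i != nxt j)) ==> (p.1 i == p.2 i)]
             then t (p.1 j) (p.1 (nxt j)) (p.2 j) (p.2 (nxt j)) else 0].

Definition ketbra (a b : 'I_3 -> 'I_3 -> C) : 'I_3 -> 'I_3 -> 'I_3 -> 'I_3 -> C :=
  fun k1' k2' k1 k2 => a k1' k2' * (b k1 k2)^*.

(* single-site spin-1 raising operator: S^+ |m> = sqrt(2 - m(m+1)) |m+1> *)
Definition splus1 (k' k : 'I_3) : C :=
  let m : C := k%:R - 1 in
  if k' == k.+1 :> nat then sqrtC (2 - m * (m + 1)) else 0.
Definition Splus (j : 'I_L) : op := site_op j splus1.

(* Two-site total-spin-2 eigenstates |J_{2,M}> with M = K - 2, K = 0..4
   (Clebsch-Gordan coefficients <1 m1; 1 m2 | 2 M>, k_i = 1 + m_i):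
     <k1 k2|J_{2,M}> = [k1+k2 = K] sqrt( C(2,k1) C(2,k2) / C(4,K) ).
   Explicitly: J_{2,2} = |1,1>, J_{2,1} = (|1,0>+|0,1>)/sqrt2,
   J_{2,0} = (|1,-1> + 2|0,0> + |-1,1>)/sqrt6,
   J_{2,-1} = (|0,-1>+|-1,0>)/sqrt2, J_{2,-2} = |-1,-1>. *)
Definition J2 (K : nat) (k1 k2 : 'I_3) : C :=
  if (k1 + k2 == K)%N
  then sqrtC (('C(2, k1) * 'C(2, k2))%:R / ('C(4, K))%:R) else 0.

(* the bond Hamiltonian; z j a b = z^{(a-2, b-2)}_j for a, b : 'I_3 *)
Definition hbond (E : C) (z : 'I_L -> 'I_3 -> 'I_3 -> C) (j : 'I_L) : op :=
  opscale E (bond_op j (ketbra (J2 3) (J2 3)) + bond_op j (ketbra (J2 4) (J2 4)))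
  + \sum_(a < 3) \sum_(b < 3) opscale (z j a b) (bond_op j (ketbra (J2 a) (J2 b))).

Definition Ham (E : C) (z : 'I_L -> 'I_3 -> 'I_3 -> C) : op :=
  \sum_(j < L) hbond E z j.

(* P^(a) = sum_{j=1}^L (-1)^j (S^+_j)^2, paper's site j is our j-1 *)
Definition Pa : op :=
  \sum_(j < L) opscale ((-1) ^+ (j.+1)) (opmul (Splus j) (Splus j)).

Definition AKLT_gs (G : state) : Prop :=
  forall (j : 'I_L) (K : 'I_5), opapp (bond_op j (ketbra (J2 K) (J2 K))) G = 0.

End SpinChain.

(* Main.v *)
Require Import Defs.
From HB Require Import structures.
From mathcomp Require Import all_boot all_order all_algebra.
From mathcomp Require Import ring zify.
From Stdlib Require Import FunctionalExtensionality.
Import Order.TTheory GRing.Theory Num.Theory.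
Local Open Scope ring_scope.
Definition o0 : 'I_3 := @Ordinal 3 0 isT.
Definition o1 : 'I_3 := @Ordinal 3 1 isT.
Definition o2 : 'I_3 := @Ordinal 3 2 isT.
Lemma I3P (i : 'I_3) : [\/ i = o0, i = o1 | i = o2].
Proof.
case: i => [[|[|[|//]]] Hi]; [constructor 1|constructor 2|constructor 3]; exact: val_inj.
Qed.

Ltac fext := repeat (apply: functional_extensionality => ?).
Ltac c3 x := case: (I3P x) => ->.
Ltac fx2 := let a := fresh "a" in let b := fresh "b" in
  apply: functional_extensionality => a; apply: functional_extensionality => b; c3 a; c3 b.
Section Loc.
Variable C : numClosedFieldType.
Lemma sum3 (F : 'I_3 -> C) : \sum_(i < 3) F i = F o0 + F o1 + F o2.
Proof.
rewrite !big_ord_recr big_ord0 /= add0r.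
by congr (F _ + F _ + F _); apply: val_inj.
Qed.
Lemma sum5 (F : nat -> C) : \sum_(i < 5) F i = F 0%N + F 1%N + F 2%N + F 3%N + F 4%N.
Proof. by rewrite !big_ord_recr big_ord0 /= add0r. Qed.
Lemma sum4 (F : nat -> C) : \sum_(i < 4) F i = F 0%N + F 1%N + F 2%N + F 3%N.
Proof. by rewrite !big_ord_recr big_ord0 /= add0r. Qed.

Definition vec := 'I_3 -> 'I_3 -> C.
Definition loc := 'I_3 -> 'I_3 -> 'I_3 -> 'I_3 -> C.
Definition jn (K : nat) (k1 k2 : 'I_3) : nat :=
  match K, val k1, val k2 with
  | 0, 0, 0 => 1 | 1, 0, 1 => 1 | 1, 1, 0 => 1
  | 2, 0, 2 => 1 | 2, 1, 1 => 2 | 2, 2, 0 => 1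
  | 3, 1, 2 => 1 | 3, 2, 1 => 1 | 4, 2, 2 => 1 | _, _, _ => 0 end.
Definition jv K : vec := fun k1 k2 => (jn K k1 k2)%:R.
Definition tapp (t : loc) (v : vec) : vec :=
  fun x1 x2 => \sum_(y1 < 3) \sum_(y2 < 3) t x1 x2 y1 y2 * v y1 y2.
Definition tmul (t u : loc) : loc :=
  fun a b c d => \sum_(e < 3) \sum_(f < 3) t a b e f * u e f c d.
Definition ip (u v : vec) : C := \sum_(y1 < 3) \sum_(y2 < 3) u y1 y2 * v y1 y2.
Definition vsub (u w : vec) : vec := fun a b => u a b - w a b.
Definition vscale (c : C) (u : vec) : vec := fun a b => c * u a b.
Definition vzero : vec := fun _ _ => 0.
Definition kb (u v : vec) : loc := fun a b c d => u a b * v c d.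
Definition qq (a b : 'I_3) : C := if (val a == 2)%N && (val b == 0)%N then 2 else 0.
Definition delta (a b : 'I_3) : C := if a == b then 1 else 0.
Definition Dm : loc := fun a b c d => qq a c * delta b d - delta a c * qq b d.
Definition adc (c : C) (t : loc) : loc :=
  fun a b e f => c * (tmul t Dm a b e f - tmul Dm t a b e f).
Definition nK (K : nat) : C := match K with 1 | 3 => 1/2 | 2 => 1/6 | _ => 1 end.
Definition av (i : nat) : vec := fun k1 k2 => match i, val k1, val k2 with
  | 0,0,1 => 1 | 0,1,0 => -1 | 1,0,2 => 1 | 1,2,0 => -1 | 2,0,2 => 1
  | 2,1,1 => -1 | 2,2,0 => 1 | 3,1,2 => 1 | 3,2,1 => -1 | _,_,_ => 0 end.
Definition na (i : nat) : C := match i with 2 => 1/3 | _ => 1/2 end.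
Definition dv (i : nat) : vec :=
  match i with 0 => vscale 2 (jv 3) | 1 => vscale 4 (jv 4) | _ => vzero end.
Definition hl (E : C) (w : 'I_3 -> 'I_3 -> C) : loc := fun x1 x2 y1 y2 =>
  E * (1/2 * (jv 3 x1 x2 * jv 3 y1 y2) + jv 4 x1 x2 * jv 4 y1 y2)
  + \sum_(a < 3) \sum_(b < 3) w a b * (jv a x1 x2 * jv b y1 y2).


Lemma resolution (t : loc) : t = fun x1 x2 y1 y2 =>
  \sum_(K < 5) nK K * tapp t (jv K) x1 x2 * jv K y1 y2
  + \sum_(i < 4) na i * tapp t (av i) x1 x2 * av i y1 y2.
Proof.
apply: functional_extensionality => x1; apply: functional_extensionality => x2.
apply: functional_extensionality => y1; apply: functional_extensionality => y2.
rewrite !big_ord_recr !big_ord0 /= /tapp !sum3.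
by c3 y1; c3 y2; rewrite /jv /av /nK /na /=; field.
Qed.

Lemma Dv (v : vec) : tapp Dm v = fun x1 x2 =>
  (if (val x1 == 2)%N then 2 * v o0 x2 else 0) - (if (val x2 == 2)%N then 2 * v x1 o0 else 0).
Proof.
fx2; rewrite /tapp !sum3; rewrite /Dm /qq /delta /=; ring.
Qed.

Lemma hv E w (v : vec) : tapp (hl E w) v = fun x1 x2 =>
  E * (1/2 * (jv 3 x1 x2 * ip (jv 3) v) + jv 4 x1 x2 * ip (jv 4) v)
  + \sum_(a < 3) \sum_(b < 3) w a b * (jv a x1 x2 * ip (jv b) v).
Proof.
fext; rewrite /tapp /hl /ip !sum3 /=; ring.
Qed.

Lemma V1 E w i : (i < 4)%N -> tapp (hl E w) (av i) = vzero.
Proof.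
move=> hi; rewrite hv /vzero /ip; fext; rewrite !sum3 /=.
by case: i hi => [|[|[|[|//]]]] _; rewrite /av /jv /=; ring.
Qed.

Lemma V2 i : (i < 4)%N -> tapp Dm (av i) = dv i.
Proof.
move=> hi; rewrite Dv /dv /vscale /vzero.
by case: i hi => [|[|[|[|//]]]] _; fx2; rewrite /av /jv /=; ring.
Qed.

Lemma V3 E w i : (i < 4)%N -> tapp (hl E w) (dv i) = vscale E (dv i).
Proof.
move=> hi; rewrite hv /ip; fext; rewrite !sum3 /=.
by case: i hi => [|[|[|[|//]]]] _; rewrite /dv /vscale /vzero /jv /=; field.
Qed.

Lemma V4 i : tapp Dm (dv i) = vzero.
Proof.
rewrite Dv /dv /vscale /vzero.
by case: i => [|[|i]]; fx2; rewrite /jv /=; ring.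
Qed.

Lemma V5 v : tapp Dm (tapp Dm (tapp Dm v)) = vzero.
Proof.
rewrite !Dv /vzero; fx2; rewrite /=; ring.
Qed.

Lemma DD v : tapp Dm (tapp Dm v) = fun x1 x2 =>
  if (val x1 == 2)%N && (val x2 == 2)%N then -8 * v o0 o0 else 0.
Proof. rewrite !Dv; fx2; rewrite /=; ring. Qed.

Lemma h22 E w s : tapp (hl E w) (fun x1 x2 => if (val x1 == 2)%N && (val x2 == 2)%N then s else 0)
  = fun x1 x2 => if (val x1 == 2)%N && (val x2 == 2)%N then E * s else 0.
Proof. rewrite hv /ip; fx2; rewrite !sum3 /jv /=; ring. Qed.

Lemma V6 E w v : tapp Dm (tapp (hl E w) (tapp Dm (tapp Dm v))) = vzero.
Proof. rewrite DD h22 Dv /vzero; fx2; rewrite /=; ring. Qed.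

Lemma ipD (b : 'I_3) v : ip (jv b) (tapp Dm v) = 0.
Proof. rewrite Dv /ip !sum3; c3 b; rewrite /jv /=; ring. Qed.

Lemma V7 E w v : tapp Dm (tapp Dm (tapp (hl E w) (tapp Dm v))) = vzero.
Proof.
rewrite DD /vzero; fx2; rewrite /= ?mulr0 //.
rewrite hv !sum3 !ipD /jv /=; ring.
Qed.

End Loc.

Section Loc2.
Variable C : numClosedFieldType.
Local Notation vec := (@vec C).
Local Notation resolution := (@resolution C).
Local Notation loc := (@loc C).
Local Notation jv := (@jv C).
Local Notation tapp := (@tapp C).
Local Notation tmul := (@tmul C).
Local Notation ip := (@ip C).
Local Notation vsub := (@vsub C).
Local Notation vscale := (@vscale C).
Local Notation vzero := (@vzero C).
Local Notation kb := (@kb C).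
Local Notation qq := (@qq C).
Local Notation delta := (@delta C).
Local Notation Dm := (@Dm C).
Local Notation adc := (@adc C).
Local Notation nK := (@nK C).
Local Notation av := (@av C).
Local Notation na := (@na C).
Local Notation dv := (@dv C).
Local Notation hl := (@hl C).
Lemma tapp_adc c t v : tapp (adc c t) v = vscale c (vsub (tapp t (tapp Dm v)) (tapp Dm (tapp t v))).
Proof. fext; rewrite /tapp /adc /tmul /vscale /vsub !sum3; ring. Qed.
Lemma tapp_sub_l t u v : tapp (fun a b c d => t a b c d - u a b c d) v = vsub (tapp t v) (tapp u v).
Proof. fext; rewrite /tapp /vsub !sum3; ring. Qed.
Lemma tapp_scale_l c t v : tapp (fun a b e f => c * t a b e f) v = vscale c (tapp t v).
Proof. fext; rewrite /tapp /vscale !sum3; ring. Qed.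
Lemma tapp_vsub t u w : tapp t (vsub u w) = vsub (tapp t u) (tapp t w).
Proof. fext; rewrite /tapp /vsub !sum3; ring. Qed.
Lemma tapp_vscale t c u : tapp t (vscale c u) = vscale c (tapp t u).
Proof. fext; rewrite /tapp /vscale !sum3; ring. Qed.
Lemma tapp_vzero t : tapp t vzero = vzero.
Proof. fext; rewrite /tapp /vzero !sum3; ring. Qed.

Lemma K2 c E w i : (i < 4)%N ->
  tapp (fun a b e f => adc c (hl E w) a b e f - (c * E) * Dm a b e f) (av i) = vzero.
Proof.
move=> hi; rewrite tapp_sub_l tapp_scale_l tapp_adc V2 // V1 // tapp_vzero V3 //.
by rewrite /vsub /vscale /vzero; fext; ring.
Qed.

Lemma K3 c E w i : (i < 4)%N -> tapp (adc c (adc c (hl E w))) (av i) = vzero.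
Proof.
move=> hi; rewrite !tapp_adc !V2 // !V1 // !V4 !tapp_vzero V3 //.
rewrite ?tapp_vsub ?tapp_vscale ?V4 ?tapp_vzero ?tapp_vsub ?tapp_vscale ?V4 ?tapp_vzero.
by rewrite /vsub /vscale /vzero; fext; ring.
Qed.

Lemma K4v c E w v : tapp (adc c (adc c (adc c (hl E w)))) v = vzero.
Proof.
rewrite !tapp_adc.
rewrite ?tapp_vsub ?tapp_vscale ?V5 ?V6 ?V7 ?tapp_vzero ?tapp_vsub ?tapp_vscale ?V5 ?V6 ?V7 ?tapp_vzero ?tapp_vsub ?tapp_vscale ?V5 ?V6 ?V7 ?tapp_vzero ?tapp_vsub ?tapp_vscale ?V5 ?V6 ?V7 ?tapp_vzero .
by rewrite /vsub /vscale /vzero; fext; ring.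
Qed.

Definition ev (y1 y2 : 'I_3) : vec := fun a b => if (a == y1) && (b == y2) then 1 else 0.
Lemma col_eq (t : loc) : (forall v, tapp t v = vzero) -> t = fun _ _ _ _ => 0.
Proof.
move=> H; apply: functional_extensionality => x1; apply: functional_extensionality => x2.
apply: functional_extensionality => y1; apply: functional_extensionality => y2.
have := f_equal (fun f => f x1 x2) (H (ev y1 y2)).
rewrite /tapp !sum3 /ev /vzero; c3 y1; c3 y2; rewrite /= => <-; ring.
Qed.

Lemma K4 c E w : adc c (adc c (adc c (hl E w))) = fun _ _ _ _ => 0.
Proof. apply: col_eq => v; exact: K4v. Qed.

Lemma kill_decomp t : (forall i, (i < 4)%N -> tapp t (av i) = vzero) ->
  t = fun a b c d => \sum_(K < 5) kb (vscale (nK K) (tapp t (jv K))) (jv K) a b c d.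
Proof.
move=> ht; rewrite {1}(resolution t); fext.
rewrite [X in _ + X]big1 ?addr0; last by move=> i _; rewrite ht // /vzero; ring.
by apply: eq_bigr => K _; rewrite /kb /vscale.
Qed.
End Loc2.

Section Loc3.
Variable C : numClosedFieldType.
Local Notation vec := (@vec C).
Local Notation resolution := (@resolution C).
Local Notation loc := (@loc C).
Local Notation jv := (@jv C).
Local Notation tapp := (@tapp C).
Local Notation tmul := (@tmul C).
Local Notation ip := (@ip C).
Local Notation vsub := (@vsub C).
Local Notation vscale := (@vscale C).
Local Notation vzero := (@vzero C).
Local Notation kb := (@kb C).
Local Notation qq := (@qq C).
Local Notation delta := (@delta C).
Local Notation Dm := (@Dm C).
Local Notation adc := (@adc C).
Local Notation nK := (@nK C).
Local Notation av := (@av C).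
Local Notation na := (@na C).
Local Notation dv := (@dv C).
Local Notation hl := (@hl C).

Definition r1 (K : nat) : 'I_3 := match K with 0 | 1 | 2 => o0 | 3 => o1 | _ => o2 end.
Definition r2 (K : nat) : 'I_3 := match K with 0 => o0 | 1 => o1 | _ => o2 end.
Definition cK (K : nat) : C := J2 C K (r1 K) (r2 K).

Lemma J2E K k1 k2 : (K < 5)%N -> J2 C K k1 k2 = cK K * jv K k1 k2.
Proof.
move=> hK; rewrite /cK.
case: K hK => [|[|[|[|[|//]]]]] _; c3 k1; c3 k2; rewrite /J2 /jv /= ?mulr0 ?mulr1 //.
have e : ('C(2, 1) * 'C(2, 1))%:R / 'C(4, 2)%:R =
  2%:R ^+ 2 * (('C(2, 0) * 'C(2, 2))%:R / 'C(4, 2)%:R) :> C.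
  by rewrite !natrM bin0 bin1 binn; ring.
rewrite e sqrtCM; [|by rewrite nnegrE exprn_ge0 ?ler0n|by rewrite nnegrE divr_ge0 ?ler0n].
by rewrite sqrCK ?ler0n // mulrC.
Qed.

Lemma cK_conj K : (cK K)^* = cK K.
Proof.
rewrite /cK /J2; case: ifP => _; last by rewrite rmorph0.
by apply: geC0_conj; rewrite sqrtC_ge0 divr_ge0 // ler0n.
Qed.

Lemma cKsq K : (K < 5)%N -> cK K * (cK K)^* = nK K.
Proof.
move=> hK; rewrite cK_conj -expr2 /cK.
case: K hK => [|[|[|[|[|//]]]]] _; rewrite /J2 /nK /= sqrtCK !natrM ?bin0 ?bin1 ?binn.
- by field.
- by field.
- by rewrite (_ : 'C(4, 2) = 6%N) //; field.
- by rewrite (_ : 'C(4, 3) = 4%N) //; field.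
- by field.
Qed.

Lemma conjM (x y : C) : (x * y)^* = x^* * y^*.
Proof. exact: rmorphM. Qed.

Lemma conj_jv K a b : (jv K a b)^* = jv K a b.
Proof. exact: conjC_nat. Qed.

Lemma kbJ K : (K < 5)%N ->
  ketbra (J2 C K) (J2 C K) = fun a b c d => nK K * (jv K a b * jv K c d).
Proof.
move=> hK; fext; rewrite /ketbra !J2E // conjM conj_jv -(cKsq K hK); ring.
Qed.

Lemma tmul_kill u K : (K < 5)%N ->
  tmul (kb u (jv K)) (ketbra (J2 C K) (J2 C K)) = kb u (jv K).
Proof.
move=> hK; rewrite kbJ //.
apply: functional_extensionality => x1; apply: functional_extensionality => x2.
apply: functional_extensionality => y1; apply: functional_extensionality => y2.
rewrite /tmul /kb !sum3.
by case: K hK => [|[|[|[|[|//]]]]] _; c3 y1; c3 y2; rewrite /jv /nK /=; field.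
Qed.
End Loc3.

Section Glob.
Variable C : numClosedFieldType.
Variable L : nat.
Local Notation vec := (@vec C).
Local Notation loc := (@loc C).
Local Notation jv := (@jv C).
Local Notation tapp := (@tapp C).
Local Notation tmul := (@tmul C).
Local Notation ip := (@ip C).
Local Notation vsub := (@vsub C).
Local Notation vscale := (@vscale C).
Local Notation vzero := (@vzero C).
Local Notation kb := (@kb C).
Local Notation qq := (@qq C).
Local Notation delta := (@delta C).
Local Notation Dm := (@Dm C).
Local Notation adc := (@adc C).
Local Notation nK := (@nK C).
Local Notation av := (@av C).
Local Notation na := (@na C).
Local Notation dv := (@dv C).
Local Notation hl := (@hl C).
Local Notation cK := (@cK C).

Local Notation cfg := (cfg L).
Local Notation op := (op C L).
Local Notation state := (state C L).
Implicit Types (j k : 'I_L) (x y : cfg) (v w : state).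

Definition Bc (j : 'I_L) (x y : cfg) : bool :=
  [forall i, ((i != j) && (i != nxt j)) ==> (x i == y i)].
Definition Sc (k : 'I_L) (x y : cfg) : bool := [forall i, (i != k) ==> (x i == y i)].

Lemma bond_opE j (t : loc) x y : bond_op j t (x, y) =
  if Bc j x y then t (x j) (x (nxt j)) (y j) (y (nxt j)) else 0.
Proof. by rewrite ffunE. Qed.
Lemma site_opE k (s : 'I_3 -> 'I_3 -> C) x y : site_op k s (x, y) =
  if Sc k x y then s (x k) (y k) else 0.
Proof. by rewrite ffunE. Qed.

Lemma bond_op_ext j (t u : loc) : (forall a b c d, t a b c d = u a b c d) ->
  bond_op j t = bond_op j u.
Proof. by move=> h; apply/ffunP => -[x y]; rewrite !bond_opE h. Qed.
Lemma bond_opD j (t u : loc) :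
  bond_op j t + bond_op j u = bond_op j (fun a b c d => t a b c d + u a b c d).
Proof. apply/ffunP => -[x y]; rewrite !ffunE /=; case: ifP => _ //; by rewrite addr0. Qed.
Lemma bond_opB j (t u : loc) :
  bond_op j t - bond_op j u = bond_op j (fun a b c d => t a b c d - u a b c d).
Proof. apply/ffunP => -[x y]; rewrite !ffunE /=; case: ifP => _ //; by rewrite subr0. Qed.
Lemma bond_opZ j c (t : loc) :
  opscale c (bond_op j t) = bond_op j (fun a b e f => c * t a b e f).
Proof. apply/ffunP => -[x y]; rewrite !ffunE /=; case: ifP => _ //; by rewrite mulr0. Qed.
Lemma bond_op_sum j n (F : 'I_n -> loc) :
  \sum_(a < n) bond_op j (F a) = bond_op j (fun a1 a2 b1 b2 => \sum_(a < n) F a a1 a2 b1 b2).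
Proof.
apply/ffunP => -[x y]; rewrite sum_ffunE !bond_opE.
under eq_bigr do rewrite bond_opE.
by case: ifP => _ //; rewrite big1.
Qed.
Lemma bond_op0 j : bond_op j (fun _ _ _ _ => 0 : C) = 0.
Proof. by apply/ffunP => -[x y]; rewrite !ffunE /=; case: ifP. Qed.

Lemma opapp_opmul (A B : op) v : opapp (opmul A B) v = opapp A (opapp B v).
Proof.
apply/ffunP => x; rewrite !ffunE.
under [RHS]eq_bigr do rewrite ffunE big_distrr.
rewrite exchange_big /=; apply: eq_bigr => y _.
rewrite ffunE big_distrl /=; apply: eq_bigr => z _.
by rewrite mulrA.
Qed.
Lemma opapp_sub (A B : op) v : opapp (A - B) v = opapp A v - opapp B v.
Proof.
apply/ffunP => x; rewrite !ffunE -sumrB; apply: eq_bigr => y _.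
by rewrite !ffunE mulrBl.
Qed.
Lemma opapp_add (A B : op) v : opapp (A + B) v = opapp A v + opapp B v.
Proof.
apply/ffunP => x; rewrite !ffunE -big_split; apply: eq_bigr => y _.
by rewrite !ffunE mulrDl.
Qed.
Lemma opapp0l v : opapp (0 : op) v = 0.
Proof. apply/ffunP => x; rewrite !ffunE big1 // => y _; by rewrite ffunE mul0r. Qed.
Lemma opapp_sum n (F : 'I_n -> op) v : opapp (\sum_(j < n) F j) v = \sum_(j < n) opapp (F j) v.
Proof.
elim: n F => [|n IH] F; first by rewrite !big_ord0 opapp0l.
by rewrite !big_ord_recr opapp_add IH.
Qed.
Lemma opapp_scale c (A : op) v : opapp (opscale c A) v = stscale c (opapp A v).
Proof.
apply/ffunP => x; rewrite !ffunE big_distrr; apply: eq_bigr => y _.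
by rewrite ffunE -mulrA.
Qed.
Lemma opapp_vsub (A : op) v w : opapp A (v - w) = opapp A v - opapp A w.
Proof.
apply/ffunP => x; rewrite !ffunE -sumrB; apply: eq_bigr => y _.
by rewrite !ffunE mulrBr.
Qed.
Lemma opapp_vadd (A : op) v w : opapp A (v + w) = opapp A v + opapp A w.
Proof.
apply/ffunP => x; rewrite !ffunE -big_split; apply: eq_bigr => y _.
by rewrite !ffunE mulrDr.
Qed.
Lemma opapp_vscale (A : op) c v : opapp A (stscale c v) = stscale c (opapp A v).
Proof.
apply/ffunP => x; rewrite !ffunE big_distrr; apply: eq_bigr => y _.
by rewrite ffunE mulrCA.
Qed.
Lemma opapp_v0 (A : op) : opapp A 0 = 0.
Proof.
apply/ffunP => x; rewrite !ffunE big1 // => y _; by rewrite ffunE mulr0.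
Qed.
Lemma opapp_comm (A B : op) v : opapp (comm A B) v = opapp A (opapp B v) - opapp B (opapp A v).
Proof. by rewrite /comm opapp_sub !opapp_opmul. Qed.

Lemma opmul_sumr (A : op) n (F : 'I_n -> op) :
  opmul A (\sum_(k < n) F k) = \sum_(k < n) opmul A (F k).
Proof.
apply/ffunP => p; rewrite ffunE sum_ffunE.
under eq_bigr do rewrite sum_ffunE big_distrr /=.
rewrite exchange_big; apply: eq_bigr => k _; by rewrite ffunE.
Qed.
Lemma opmul_suml (B : op) n (F : 'I_n -> op) :
  opmul (\sum_(k < n) F k) B = \sum_(k < n) opmul (F k) B.
Proof.
apply/ffunP => p; rewrite ffunE sum_ffunE.
under eq_bigr do rewrite sum_ffunE big_distrl /=.
rewrite exchange_big; apply: eq_bigr => k _; by rewrite ffunE.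
Qed.
Lemma opmul_scaler (A B : op) c : opmul A (opscale c B) = opscale c (opmul A B).
Proof.
apply/ffunP => p; rewrite !ffunE big_distrr; apply: eq_bigr => z _.
by rewrite ffunE mulrCA.
Qed.
Lemma opmul_scalel (A B : op) c : opmul (opscale c A) B = opscale c (opmul A B).
Proof.
apply/ffunP => p; rewrite !ffunE big_distrr; apply: eq_bigr => z _.
by rewrite ffunE -mulrA.
Qed.
Lemma opscale_sub c (A B : op) : opscale c (A - B) = opscale c A - opscale c B.
Proof. by apply/ffunP => p; rewrite !ffunE mulrBr. Qed.
Lemma opscale0 c : opscale c (0 : op) = 0.
Proof. by apply/ffunP => p; rewrite !ffunE mulr0. Qed.
Lemma comm_suml n (F : 'I_n -> op) B : comm (\sum_(j < n) F j) B = \sum_(j < n) comm (F j) B.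
Proof. by rewrite /comm opmul_suml opmul_sumr -sumrB. Qed.
Lemma comm_sumr_scale (A : op) n (c : 'I_n -> C) (F : 'I_n -> op) :
  comm A (\sum_(k < n) opscale (c k) (F k)) = \sum_(k < n) opscale (c k) (comm A (F k)).
Proof.
rewrite /comm opmul_suml opmul_sumr -sumrB; apply: eq_bigr => k _.
by rewrite opmul_scaler opmul_scalel opscale_sub.
Qed.
End Glob.

Section GlobB.
Variable C : numClosedFieldType.
Variable L : nat.
Local Notation vec := (@vec C).
Local Notation loc := (@loc C).
Local Notation jv := (@jv C).
Local Notation tapp := (@tapp C).
Local Notation tmul := (@tmul C).
Local Notation ip := (@ip C).
Local Notation vsub := (@vsub C).
Local Notation vscale := (@vscale C).
Local Notation vzero := (@vzero C).
Local Notation kb := (@kb C).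
Local Notation qq := (@qq C).
Local Notation delta := (@delta C).
Local Notation Dm := (@Dm C).
Local Notation adc := (@adc C).
Local Notation nK := (@nK C).
Local Notation av := (@av C).
Local Notation na := (@na C).
Local Notation dv := (@dv C).
Local Notation hl := (@hl C).
Local Notation cK := (@cK C).

Local Notation cfg := (cfg L).
Local Notation op := (op C L).
Local Notation state := (state C L).
Implicit Types (j k : 'I_L) (x y : cfg) (v w : state).

Local Notation Bc := (@Bc L).
Local Notation Sc := (@Sc L).
Local Notation bond_opE := (@bond_opE C L).
Local Notation site_opE := (@site_opE C L).

Definition upd j x (e f : 'I_3) : cfg :=
  [ffun i => if i == j then e else if i == nxt j then f else x i].

Lemma upd_j j x e f : upd j x e f j = e.
Proof. by rewrite ffunE eqxx. Qed.
Lemma upd_nj j x e f : nxt j != j -> upd j x e f (nxt j) = f.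
Proof. by move=> h; rewrite ffunE (negbTE h) eqxx. Qed.

Lemma Bc_upd j x y e f : Bc j x y -> Bc j x (upd j y e f) && Bc j (upd j x e f) y.
Proof.
move=> /forallP H; apply/andP; split; apply/forallP => i; apply/implyP => /andP [h1 h2];
  rewrite ffunE (negbTE h1) (negbTE h2); have := implyP (H i); rewrite h1 h2; by apply.
Qed.
Lemma Bc_refl_upd j x e f : Bc j x (upd j x e f).
Proof.
apply/forallP => i; apply/implyP => /andP [h1 h2]; by rewrite ffunE (negbTE h1) (negbTE h2).
Qed.
Lemma Bc_trans j x y z : Bc j x y -> Bc j y z -> Bc j x z.
Proof.
move=> /forallP H1 /forallP H2; apply/forallP => i; apply/implyP => h.
by rewrite (eqP (implyP (H1 i) h)) (implyP (H2 i) h).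
Qed.
Lemma upd_self j x z : Bc j x z -> z = upd j x (z j) (z (nxt j)).
Proof.
move=> /forallP H; apply/ffunP => i; rewrite ffunE.
case: eqP => [->|/eqP h1] //; case: eqP => [->|/eqP h2] //.
by have := implyP (H i); rewrite h1 h2 => /(_ isT) /eqP.
Qed.

Lemma sum_pick (F : 'I_3 -> C) e0 : \sum_(e < 3) (if e == e0 then F e else 0) = F e0.
Proof. by rewrite -big_mkcond big_pred1_eq. Qed.

Lemma sum_upd j x (F : cfg -> C) : nxt j != j -> (forall z, ~~ Bc j x z -> F z = 0) ->
  \sum_z F z = \sum_(e < 3) \sum_(f < 3) F (upd j x e f).
Proof.
move=> hj hF.
have e1 : forall e f, F (upd j x e f) = \sum_z (if z == upd j x e f then F z else 0).
  by move=> e f; rewrite -big_mkcond big_pred1_eq.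
under [RHS]eq_bigr do under eq_bigr do rewrite e1.
under [RHS]eq_bigr do rewrite exchange_big.
rewrite exchange_big; apply: eq_bigr => z _.
case: (boolP (Bc j x z)) => hz; last first.
  rewrite hF //; symmetry; apply: big1 => e _; apply: big1 => f _; by case: ifP.
rewrite (bigD1 (z j)) //= [X in _ + X]big1 ?addr0; last first.
  move=> e he; apply: big1 => f _; case: eqP => // hze.
  by move: he; rewrite hze upd_j eqxx.
rewrite (bigD1 (z (nxt j))) //= [X in _ + X]big1 ?addr0; last first.
  move=> f hf; case: eqP => // hze.
  by move: hf; rewrite hze upd_nj // eqxx.
by rewrite -upd_self // eqxx.
Qed.

Lemma bond_mul j (t u : loc) : nxt j != j ->
  opmul (bond_op j t) (bond_op j u) = bond_op j (tmul t u).
Proof.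
move=> hj; apply/ffunP => -[x y]; rewrite ffunE /= bond_opE.
case: (boolP (Bc j x y)) => hxy; last first.
  apply: big1 => z _; rewrite !bond_opE.
  case: (boolP (Bc j x z)) => h1; case: (boolP (Bc j z y)) => h2; rewrite ?mul0r ?mulr0 //.
  by move: hxy; rewrite (Bc_trans _ _ _ _ h1 h2).
rewrite (@sum_upd j x) //; last first.
  by move=> z hz; rewrite bond_opE (negbTE hz) mul0r.
rewrite /tmul; apply: eq_bigr => e _; apply: eq_bigr => f _.
have /andP [_ h2] := Bc_upd _ _ _ e f hxy.
by rewrite !bond_opE Bc_refl_upd h2 upd_j upd_nj.
Qed.

Lemma Sc_l j x y : nxt j != j -> Sc j x y = Bc j x y && (x (nxt j) == y (nxt j)).
Proof.
move=> hj; apply/idP/andP => [/forallP H|[/forallP H1 /eqP H2]].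
  split; last by apply: (implyP (H (nxt j))).
  apply/forallP => i; apply/implyP => /andP [h1 _]; exact: (implyP (H i)).
apply/forallP => i; apply/implyP => h1.
case: (eqVneq i (nxt j)) => [->|h2]; first by rewrite H2.
by apply: (implyP (H1 i)); rewrite h1 h2.
Qed.

Lemma Sc_r j x y : nxt j != j -> Sc (nxt j) x y = Bc j x y && (x j == y j).
Proof.
move=> hj; apply/idP/andP => [/forallP H|[/forallP H1 /eqP H2]].
  split; last by apply: (implyP (H j)); rewrite eq_sym.
  apply/forallP => i; apply/implyP => /andP [_ h2]; exact: (implyP (H i)).
apply/forallP => i; apply/implyP => h2.
case: (eqVneq i j) => [->|h1]; first by rewrite H2.
by apply: (implyP (H1 i)); rewrite h1 h2.
Qed.

Lemma site_bondl j (s : 'I_3 -> 'I_3 -> C) : nxt j != j ->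
  site_op j s = bond_op j (fun a' b' a b => s a' a * delta b' b).
Proof.
move=> hj; apply/ffunP => -[x y]; rewrite site_opE bond_opE Sc_l //.
case: (Bc j x y) => //=; rewrite /delta; case: eqP => _; by rewrite ?mulr1 ?mulr0.
Qed.

Lemma site_bondr j (s : 'I_3 -> 'I_3 -> C) : nxt j != j ->
  site_op (nxt j) s = bond_op j (fun a' b' a b => delta a' a * s b' b).
Proof.
move=> hj; apply/ffunP => -[x y]; rewrite site_opE bond_opE Sc_r //.
case: (Bc j x y) => //=; rewrite /delta; case: eqP => _; by rewrite ?mul1r ?mul0r.
Qed.

Lemma bond_site_comm j k (t : loc) (s : 'I_3 -> 'I_3 -> C) : k != j -> k != nxt j ->
  opmul (bond_op j t) (site_op k s) = opmul (site_op k s) (bond_op j t).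
Proof.
move=> hk1 hk2; apply/ffunP => -[x y]; rewrite !ffunE /=.
pose z0 : cfg := [ffun i => if i == k then x k else y i].
pose w0 : cfg := [ffun i => if i == k then y k else x i].
rewrite (bigD1 z0) //= big1 ?addr0; last first.
  move=> z hz; rewrite bond_opE site_opE.
  case: (boolP (Bc j x z)) => h1; case: (boolP (Sc k z y)) => h2; rewrite ?mul0r ?mulr0 //.
  have ez : z = z0.
    apply/ffunP => i; rewrite ffunE.
    case: eqP => [->|/eqP hi]; last by apply/eqP; exact: (implyP (forallP h2 i)).
    by apply/esym/eqP; apply: (implyP (forallP h1 k)); rewrite hk1 hk2.
  by move: hz; rewrite ez eqxx.
rewrite [RHS](bigD1 w0) //= big1 ?addr0; last first.
  move=> w hw; rewrite bond_opE site_opE.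
  case: (boolP (Sc k x w)) => h1; case: (boolP (Bc j w y)) => h2; rewrite ?mul0r ?mulr0 //.
  have ew : w = w0.
    apply/ffunP => i; rewrite ffunE.
    case: eqP => [->|/eqP hi]; first by apply/eqP; apply: (implyP (forallP h2 k)); rewrite hk1 hk2.
    by apply/esym/eqP; exact: (implyP (forallP h1 i)).
  by move: hw; rewrite ew eqxx.
have eB : Bc j x z0 = Bc j w0 y.
  apply/forallP/forallP => H i; apply/implyP => hi; have := implyP (H i) hi;
  rewrite !ffunE; case: (eqVneq i k) => [->|hik]; rewrite ?eqxx ?(negbTE hik) //; exact: id.
have hS1 : Sc k z0 y.
  by apply/forallP => i; apply/implyP => hi; rewrite ffunE (negbTE hi).
have hS2 : Sc k x w0.
  by apply/forallP => i; apply/implyP => hi; rewrite ffunE (negbTE hi).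
rewrite !bond_opE !site_opE eB hS1 hS2 !ffunE eqxx.
rewrite [j == k]eq_sym (negbTE hk1) [nxt j == k]eq_sym (negbTE hk2).
by case: (Bc j w0 y); rewrite ?mulr0 ?mul0r // mulrC.
Qed.
End GlobB.

Section GlobC.
Variable C : numClosedFieldType.
Variable L : nat.
Local Notation vec := (@vec C).
Local Notation loc := (@loc C).
Local Notation jv := (@jv C).
Local Notation tapp := (@tapp C).
Local Notation tmul := (@tmul C).
Local Notation ip := (@ip C).
Local Notation vsub := (@vsub C).
Local Notation vscale := (@vscale C).
Local Notation vzero := (@vzero C).
Local Notation kb := (@kb C).
Local Notation qq := (@qq C).
Local Notation delta := (@delta C).
Local Notation Dm := (@Dm C).
Local Notation adc := (@adc C).
Local Notation nK := (@nK C).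
Local Notation av := (@av C).
Local Notation na := (@na C).
Local Notation dv := (@dv C).
Local Notation hl := (@hl C).
Local Notation cK := (@cK C).

Local Notation cfg := (cfg L).
Local Notation op := (op C L).
Local Notation state := (state C L).
Implicit Types (j k : 'I_L) (x y : cfg) (v w : state).

Local Notation Bc := (@Bc L).
Local Notation Sc := (@Sc L).
Local Notation bond_opE := (@bond_opE C L).
Local Notation site_opE := (@site_opE C L).

Local Notation bond_mul := (@bond_mul C L).
Local Notation site_bondl := (@site_bondl C L).
Local Notation site_bondr := (@site_bondr C L).
Local Notation bond_site_comm := (@bond_site_comm C L).
Local Notation bond_op_ext := (@bond_op_ext C L).
Local Notation bond_opD := (@bond_opD C L).
Local Notation bond_opB := (@bond_opB C L).
Local Notation bond_opZ := (@bond_opZ C L).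
Local Notation bond_op_sum := (@bond_op_sum C L).
Local Notation bond_op0 := (@bond_op0 C L).
Local Notation opapp_opmul := (@opapp_opmul C L).
Local Notation opapp_sub := (@opapp_sub C L).
Local Notation opapp_add := (@opapp_add C L).
Local Notation opapp_sum := (@opapp_sum C L).
Local Notation opapp_scale := (@opapp_scale C L).
Local Notation opapp_vsub := (@opapp_vsub C L).
Local Notation opapp_vadd := (@opapp_vadd C L).
Local Notation opapp_vscale := (@opapp_vscale C L).
Local Notation opapp_v0 := (@opapp_v0 C L).
Local Notation opapp_comm := (@opapp_comm C L).
Local Notation opmul_sumr := (@opmul_sumr C L).
Local Notation opmul_suml := (@opmul_suml C L).
Local Notation opscale_sub := (@opscale_sub C L).
Local Notation opscale0 := (@opscale0 C L).
Local Notation comm_suml := (@comm_suml C L).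
Local Notation comm_sumr_scale := (@comm_sumr_scale C L).
Local Notation opapp0l := (@opapp0l C L).

Hypothesis hL : ~~ odd L.
Definition cs j : C := (-1) ^+ (nat_of_ord j).+1.

Lemma nxt_neq j : nxt j != j.
Proof.
apply/eqP => /(f_equal val) /=.
have := ltn_ord j; move: (nat_of_ord j) => m hm.
case: (ltnP m.+1 L) => h; first by rewrite modn_small //; lia.
have eL : L = m.+1 by apply/eqP; rewrite eqn_leq hm h.
rewrite eL modnn => e; move: hL; by rewrite eL -e.
Qed.

Lemma cs_nxt j : cs (nxt j) = - cs j.
Proof.
rewrite /cs /nxt /=.
have := ltn_ord j; move: (nat_of_ord j) => m hm.
case: (ltnP m.+1 L) => h; first by rewrite modn_small // exprS mulN1r.
have eL : L = m.+1 by apply/eqP; rewrite eqn_leq hm h.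
have ho : odd m.+1 = false by move: hL; rewrite eL => /negbTE.
by rewrite eL modnn -[(-1) ^+ m.+1]signr_odd ho expr0 expr1.
Qed.

Lemma splusE (a b : 'I_3) : splus1 C a b = if (val a == (val b).+1)%N then sqrtC 2 else 0.
Proof. c3 a; c3 b; rewrite /splus1 /= //; congr sqrtC; ring. Qed.

Lemma qq_sq (a c : 'I_3) : \sum_(e < 3) splus1 C a e * splus1 C e c = qq a c.
Proof.
have s2 : sqrtC 2 * sqrtC 2 = 2 :> C by rewrite -expr2 sqrtCK.
rewrite sum3 !splusE /qq; c3 a; c3 c; rewrite /= ?mulr0 ?mul0r ?addr0 ?add0r ?s2 //.
Qed.

Lemma tmul_sd (s s' : 'I_3 -> 'I_3 -> C) :
  tmul (fun a' b' a b => s a' a * delta b' b) (fun a' b' a b => s' a' a * delta b' b)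
  = fun a' b' a b => (\sum_(e < 3) s a' e * s' e a) * delta b' b.
Proof.
apply: functional_extensionality => a1; apply: functional_extensionality => b1.
apply: functional_extensionality => a2; apply: functional_extensionality => b2.
rewrite /tmul !sum3 /delta; c3 b1; c3 b2; rewrite /=; ring.
Qed.

Lemma Qlem k : opmul (Splus C k) (Splus C k) = site_op k qq.
Proof.
rewrite /Splus !site_bondl ?nxt_neq // bond_mul ?nxt_neq // tmul_sd.
apply: bond_op_ext => a b c d; by rewrite qq_sq.
Qed.

Lemma PaE : Pa C L = \sum_(k < L) opscale (cs k) (site_op k qq).
Proof. by rewrite /Pa; apply: eq_bigr => k _; rewrite Qlem. Qed.

Lemma comm_bondP j (t : loc) : comm (bond_op j t) (Pa C L) = bond_op j (adc (cs j) t).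
Proof.
rewrite PaE comm_sumr_scale (bigD1 j) // (bigD1 (nxt j)) /=; last by rewrite nxt_neq.
rewrite big1 ?addr0; last first.
  move=> k /andP [h1 h2]; rewrite /comm bond_site_comm // subrr; exact: opscale0.
rewrite cs_nxt /comm site_bondl ?nxt_neq // site_bondr ?nxt_neq // !bond_mul ?nxt_neq //.
rewrite !bond_opB !bond_opZ bond_opD; apply: bond_op_ext => a b c d.
rewrite /adc /tmul /Dm !sum3; ring.
Qed.

Lemma P2 : \sum_(j < L) bond_op j (fun a b c d => cs j * Dm a b c d) = Pa C L + Pa C L.
Proof.
have e : forall j, bond_op j (fun a b c d => cs j * Dm a b c d) =
    opscale (cs j) (site_op j qq) + opscale (cs (nxt j)) (site_op (nxt j) qq).
  move=> j; rewrite cs_nxt site_bondl ?nxt_neq // site_bondr ?nxt_neq // !bond_opZ bond_opD.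
  apply: bond_op_ext => a b c d; rewrite /Dm; ring.
under eq_bigr do rewrite e.
rewrite big_split /= PaE; congr (_ + _).
by rewrite [RHS](reindex_inj (@ordS_inj L)) /nxt.
Qed.
End GlobC.

Section GlobD.
Variable C : numClosedFieldType.
Variable L : nat.
Local Notation vec := (@vec C).
Local Notation loc := (@loc C).
Local Notation jv := (@jv C).
Local Notation tapp := (@tapp C).
Local Notation tmul := (@tmul C).
Local Notation ip := (@ip C).
Local Notation vsub := (@vsub C).
Local Notation vscale := (@vscale C).
Local Notation vzero := (@vzero C).
Local Notation kb := (@kb C).
Local Notation qq := (@qq C).
Local Notation delta := (@delta C).
Local Notation Dm := (@Dm C).
Local Notation adc := (@adc C).
Local Notation nK := (@nK C).
Local Notation av := (@av C).
Local Notation na := (@na C).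
Local Notation dv := (@dv C).
Local Notation hl := (@hl C).
Local Notation cK := (@cK C).

Local Notation cfg := (cfg L).
Local Notation op := (op C L).
Local Notation state := (state C L).
Implicit Types (j k : 'I_L) (x y : cfg) (v w : state).

Local Notation Bc := (@Bc L).
Local Notation Sc := (@Sc L).
Local Notation bond_opE := (@bond_opE C L).
Local Notation site_opE := (@site_opE C L).

Local Notation bond_mul := (@bond_mul C L).
Local Notation site_bondl := (@site_bondl C L).
Local Notation site_bondr := (@site_bondr C L).
Local Notation bond_site_comm := (@bond_site_comm C L).
Local Notation bond_op_ext := (@bond_op_ext C L).
Local Notation bond_opD := (@bond_opD C L).
Local Notation bond_opB := (@bond_opB C L).
Local Notation bond_opZ := (@bond_opZ C L).
Local Notation bond_op_sum := (@bond_op_sum C L).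
Local Notation bond_op0 := (@bond_op0 C L).
Local Notation opapp_opmul := (@opapp_opmul C L).
Local Notation opapp_sub := (@opapp_sub C L).
Local Notation opapp_add := (@opapp_add C L).
Local Notation opapp_sum := (@opapp_sum C L).
Local Notation opapp_scale := (@opapp_scale C L).
Local Notation opapp_vsub := (@opapp_vsub C L).
Local Notation opapp_vadd := (@opapp_vadd C L).
Local Notation opapp_vscale := (@opapp_vscale C L).
Local Notation opapp_v0 := (@opapp_v0 C L).
Local Notation opapp_comm := (@opapp_comm C L).
Local Notation opmul_sumr := (@opmul_sumr C L).
Local Notation opmul_suml := (@opmul_suml C L).
Local Notation opscale_sub := (@opscale_sub C L).
Local Notation opscale0 := (@opscale0 C L).
Local Notation comm_suml := (@comm_suml C L).
Local Notation comm_sumr_scale := (@comm_sumr_scale C L).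
Local Notation opapp0l := (@opapp0l C L).

Hypothesis hL : ~~ odd L.
Local Notation nxt_neq := (@nxt_neq L hL).
Local Notation cs_nxt := (@cs_nxt C L hL).
Local Notation Qlem := (@Qlem C L hL).
Local Notation PaE := (@PaE C L hL).
Local Notation comm_bondP := (@comm_bondP C L hL).
Local Notation P2 := (@P2 C L hL).
Local Notation cs := (@cs C L).


Local Notation tmul_kill := (@tmul_kill C).
Local Notation kill_decomp := (@kill_decomp C).
Local Notation kbJ := (@kbJ C).
Local Notation J2E := (@J2E C).
Local Notation conjM := (@conjM C).
Local Notation conj_jv := (@conj_jv C).

Definition wz (z : 'I_L -> 'I_3 -> 'I_3 -> C) j (a b : 'I_3) : C := z j a b * cK a * (cK b)^*.

Lemma lt5 (a : 'I_3) : (a < 5)%N.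
Proof. exact: (leq_trans (ltn_ord a)). Qed.

Lemma HamE E z : Ham E z = \sum_(j < L) bond_op j (hl E (wz z j)).
Proof.
rewrite /Ham; apply: eq_bigr => j _; rewrite /hbond bond_opD bond_opZ.
under eq_bigr do under eq_bigr do rewrite bond_opZ.
under eq_bigr do rewrite bond_op_sum.
rewrite bond_op_sum bond_opD; apply: bond_op_ext => x1 x2 y1 y2.
rewrite /hl (kbJ 3) // (kbJ 4) //; congr (_ + _); first by rewrite /nK; ring.
apply: eq_bigr => a _; apply: eq_bigr => b _.
rewrite /ketbra !J2E ?lt5 // conjM conj_jv /wz; ring.
Qed.

Variable G : state.
Hypothesis hG : AKLT_gs G.

Lemma kill_basic j (u : vec) K : (K < 5)%N -> opapp (bond_op j (kb u (jv K))) G = 0.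
Proof.
move=> hK; rewrite -(tmul_kill u K hK) -bond_mul; last exact: nxt_neq.
rewrite opapp_opmul.
have h := hG j (Ordinal hK); rewrite /= in h.
by rewrite h opapp_v0.
Qed.

Lemma kill_gen j (t : loc) : (forall i, (i < 4)%N -> tapp t (av i) = vzero) ->
  opapp (bond_op j t) G = 0.
Proof.
move=> H; rewrite (kill_decomp t H).
rewrite -(bond_op_sum j 5 (fun K : 'I_5 => kb (vscale (nK K) (tapp t (jv K))) (jv K))).
rewrite opapp_sum big1 // => K _; exact: kill_basic.
Qed.

Lemma stscale_add c (v w : state) : stscale c (v + w) = stscale c v + stscale c w.
Proof. by apply/ffunP => x; rewrite !ffunE mulrDr. Qed.
Lemma stscale0 c : stscale c (0 : state) = 0.
Proof. by apply/ffunP => x; rewrite !ffunE mulr0. Qed.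
Lemma stscale_sum c n (F : 'I_n -> state) : stscale c (\sum_(j < n) F j) = \sum_(j < n) stscale c (F j).
Proof.
elim: n F => [|n IH] F; first by rewrite !big_ord0 stscale0.
by rewrite !big_ord_recr stscale_add IH.
Qed.

Lemma twoP E : stscale (2 * E) (opapp (Pa C L) G) =
  \sum_(j < L) opapp (bond_op j (fun a b c d => (cs j * E) * Dm a b c d)) G.
Proof.
have e : forall j, bond_op j (fun a b c d => (cs j * E) * Dm a b c d) =
    opscale E (bond_op j (fun a b c d => cs j * Dm a b c d)).
  by move=> j; rewrite bond_opZ; apply: bond_op_ext => a b c d; ring.
under eq_bigr do rewrite e opapp_scale.
rewrite -stscale_sum -opapp_sum P2 opapp_add.
by apply/ffunP => x; rewrite !ffunE; ring.
Qed.

Lemma stscale0l (v : state) : stscale 0 v = 0.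
Proof. by apply/ffunP => x; rewrite !ffunE mul0r. Qed.
Lemma stscaleDl a b (v : state) : stscale a v + stscale b v = stscale (a + b) v.
Proof. by apply/ffunP => x; rewrite !ffunE mulrDl. Qed.

Lemma iter_scale (A : op) n c (v : state) :
  iter n (opapp A) (stscale c v) = stscale c (iter n (opapp A) v).
Proof. by elim: n => [|n IH] //=; rewrite IH opapp_vscale. Qed.

Lemma tower (Hm Pm : op) (G0 : state) c : opapp Hm G0 = 0 ->
  opapp (comm Hm Pm) G0 = stscale c (opapp Pm G0) ->
  opapp (comm (comm Hm Pm) Pm) G0 = 0 -> comm (comm (comm Hm Pm) Pm) Pm = 0 ->
  forall n, opapp Hm (iter n (opapp Pm) G0) = stscale (n%:R * c) (iter n (opapp Pm) G0).
Proof.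
move=> h0 h1 h2 h3.
set X := comm Hm Pm; set Y := comm X Pm.
have hY : forall w, opapp Y (opapp Pm w) = opapp Pm (opapp Y w).
  move=> w; apply/eqP; rewrite -subr_eq0 -opapp_comm h3; apply/eqP; exact: opapp0l.
have hYn : forall n, opapp Y (iter n (opapp Pm) G0) = 0.
  by elim=> [|n IH] //=; rewrite hY IH opapp_v0.
have hXn : forall n, opapp X (iter n (opapp Pm) G0) = iter n (opapp Pm) (opapp X G0).
  elim=> [|n IH] //=.
  have e := opapp_comm X Pm (iter n (opapp Pm) G0); rewrite hYn in e.
  by move/eqP: e; rewrite eq_sym subr_eq0 => /eqP ->; rewrite IH.
elim=> [|n IH].
  by rewrite /= h0 mul0r stscale0l.
have e := opapp_comm Hm Pm (iter n (opapp Pm) G0).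
have -> : opapp Hm (iter n.+1 (opapp Pm) G0) =
    opapp X (iter n (opapp Pm) G0) + opapp Pm (opapp Hm (iter n (opapp Pm) G0)).
  by rewrite /X e /= subrK.
rewrite IH hXn h1 iter_scale -iterSr opapp_vscale.
by rewrite addrC stscaleDl -natr1 mulrDl mul1r.
Qed.
End GlobD.


Section Final.
Variable C : numClosedFieldType.
Variable L : nat.
Hypothesis hL : ~~ odd L.
Variable E : C.
Variable z : 'I_L -> 'I_3 -> 'I_3 -> C.
Variable G : state C L.
Hypothesis hG : AKLT_gs G.
Local Notation vec := (@vec C).
Local Notation loc := (@loc C).
Local Notation jv := (@jv C).
Local Notation tapp := (@tapp C).
Local Notation tmul := (@tmul C).
Local Notation ip := (@ip C).
Local Notation vsub := (@vsub C).
Local Notation vscale := (@vscale C).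
Local Notation vzero := (@vzero C).
Local Notation kb := (@kb C).
Local Notation qq := (@qq C).
Local Notation delta := (@delta C).
Local Notation Dm := (@Dm C).
Local Notation adc := (@adc C).
Local Notation nK := (@nK C).
Local Notation av := (@av C).
Local Notation na := (@na C).
Local Notation dv := (@dv C).
Local Notation hl := (@hl C).
Local Notation cK := (@cK C).
Local Notation K2 := (@K2 C).
Local Notation K3 := (@K3 C).
Local Notation K4 := (@K4 C).
Local Notation V1 := (@V1 C).
Local Notation bond_op0 := (@bond_op0 C L).
Local Notation bond_opB := (@bond_opB C L).
Local Notation opapp_sub := (@opapp_sub C L).
Local Notation opapp_sum := (@opapp_sum C L).
Local Notation comm_suml := (@comm_suml C L).
Local Notation tower := (@tower C L).
Local Notation HamE := (@HamE C L).
Local Notation wz := (@wz C L).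
Local Notation cs := (@cs C L).
Local Notation comm_bondP := (@comm_bondP C L hL).
Local Notation kill_gen := (@kill_gen C L hL G hG).
Local Notation twoP := (@twoP C L hL G).

Lemma final_main :
  let H := Ham E z in
  let P := Pa C L in
  [/\ opapp H G = 0,
      opapp (comm H P) G = stscale (2 * E) (opapp P G),
      opapp (comm (comm H P) P) G = 0,
      comm (comm (comm H P) P) P = 0
    & forall n : nat,
        opapp H (iter n (opapp P) G) = stscale (2 * n%:R * E) (iter n (opapp P) G)].
Proof.
move=> H P.
have hH : H = \sum_(j < L) bond_op j (hl E (wz z j)) by rewrite /H HamE.
have X1 : comm H P = \sum_(j < L) bond_op j (adc (cs j) (hl E (wz z j))).
  by rewrite hH comm_suml; apply: eq_bigr => j _; rewrite /P comm_bondP.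
have X2 : comm (comm H P) P =
    \sum_(j < L) bond_op j (adc (cs j) (adc (cs j) (hl E (wz z j)))).
  by rewrite X1 comm_suml; apply: eq_bigr => j _; rewrite /P comm_bondP.
have X3 : comm (comm (comm H P) P) P = 0.
  rewrite X2 comm_suml big1 // => j _; by rewrite /P comm_bondP K4 bond_op0.
have i1 : opapp H G = 0.
  rewrite hH opapp_sum big1 // => j _; apply: kill_gen => i hi; exact: V1.
have i2 : opapp (comm H P) G = stscale (2 * E) (opapp P G).
  rewrite X1 opapp_sum /P twoP; apply: eq_bigr => j _.
  apply/eqP; rewrite -subr_eq0 -opapp_sub bond_opB; apply/eqP.
  apply: kill_gen => i hi; exact: K2.
have i3 : opapp (comm (comm H P) P) G = 0.
  rewrite X2 opapp_sum big1 // => j _; apply: kill_gen => i hi; exact: K3.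
split => // n.
rewrite (_ : 2 * n%:R * E = n%:R * (2 * E)); last by ring.
exact: tower.
Qed.
End Final.

Theorem mainTheorem8 (C : numClosedFieldType) (L : nat) (hL : ~~ odd L)
  (E : C) (hE : E \is Num.real)
  (z : 'I_L -> 'I_3 -> 'I_3 -> C)
  (hz : forall j a b, z j a b = (z j b a)^*)
  (G : state C L) (hG : AKLT_gs G) :
  let H := Ham E z in
  let P := Pa C L in
  [/\ opapp H G = 0,
      opapp (comm H P) G = stscale (2 * E) (opapp P G),
      opapp (comm (comm H P) P) G = 0,
      comm (comm (comm H P) P) P = 0
    & forall n : nat,
        opapp H (iter n (opapp P) G) = stscale (2 * n%:R * E) (iter n (opapp P) G)].
Proof. exact: (@final_main C L hL E z G hG). Qed.
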